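(* The inverse of $T$ (defined on the range of $T$) is unbounded, i.e. there is no constant $C<\infty$ with $\|\rho\|_{\ell^2(\mathbb{Z}^2)}\leq C\|T\rho\|_{L^2(\mathbb{Z}\times[-\pi,\pi])}$ for all $\rho\in\ell^2(\mathbb{Z}\times\mathbb{Z})$.
   Context: Fix a complex number $g_\omega\neq 0$ (coupling constant). For $\theta\in[-\pi,\pi]$ let $U_\omega(\theta)$ be the unitary operator on $\ell^2(\mathbb{Z})$ with matrix entries $(U_\omega(\theta))_{k,l}=e^{\mathrm{i}(k-l)\theta}J_{k-l}(2|g_\omega|)$, $k,l\in\mathbb{Z}$, where $J_n$ is the Bessel function of the first kind of order $n$. The forward operator $T:\ell^2(\mathbb{Z}\times\mathbb{Z})\to L^2(\mathbb{Z}\times[-\pi,\pi])$ (the target space carries counting measure times Lebesgue measure) is the bounded linear operator $$(T\rho)(l,\theta)=\big(U_\omega(\theta)\rho\,U_\omega(\theta)^*\big)_{l,l}=\sum_{m,n\in\mathbb{Z}}e^{\mathrm{i}(l-m)\theta}J_{l-m}(2|g_\omega|)\,\rho_{m,n}\,e^{-\mathrm{i}(l-n)\theta}J_{l-n}(2|g_\omega|),$$ where a matrix $\rho=(\rho_{j,k})_{j,k\in\mathbb{Z}}\in\ell^2(\mathbb{Z}\times\mathbb{Z})$ is identified with a Hilbert–Schmidt operator on $\ell^2(\mathbb{Z})$. *)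

(* Defs.v *)
From Stdlib Require Import Reals Lra ZArith List ClassicalEpsilon.
Open Scope R_scope.

Definition Cplx : Type := (R * R)%type.
Definition RtoC (r : R) : Cplx := (r, 0).
Definition Cadd (z w : Cplx) : Cplx := (fst z + fst w, snd z + snd w).
Definition Cmul (z w : Cplx) : Cplx :=
  (fst z * fst w - snd z * snd w, fst z * snd w + snd z * fst w).
Definition Cconj (z : Cplx) : Cplx := (fst z, - snd z).
Definition Cnorm2 (z : Cplx) : R := fst z * fst z + snd z * snd z.
Definition Cabs (z : Cplx) : R := sqrt (Cnorm2 z).
Definition Cexpi (t : R) : Cplx := (cos t, sin t).

(* the limit of a real sequence if it converges (junk value 0 otherwise) *)
Definition Rlim (u : nat -> R) : R :=
  match excluded_middle_informative (exists l, Un_cv u l) with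
  | left H => proj1_sig (constructive_indefinite_description _ H)
  | right _ => 0
  end.

Definition series (a : nat -> R) : R := Rlim (fun N => sum_f_R0 a N).

(* Riemann integral over [a,b] when integrable (junk 0 otherwise; all integrands
   used below are continuous, hence integrable) *)
Definition Rint (f : R -> R) (a b : R) : R :=
  match excluded_middle_informative (inhabited (Riemann_integrable f a b)) with
  | left H => RiemannInt (epsilon H (fun _ => True))
  | right _ => 0
  end.

Definition BesselJ_nat (n : nat) (x : R) : R :=
  series (fun k => (-1) ^ k / (INR (fact k) * INR (fact (k + n))) * (x / 2) ^ (2 * k + n)).

(* J_{-n} = (-1)^n J_n *)
Definition BesselJ (n : Z) (x : R) : R :=
  if Z.leb 0 n then BesselJ_nat (Z.to_nat n) x
  else (-1) ^ (Z.to_nat (- n)) * BesselJ_nat (Z.to_nat (- n)) x.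

(* ---------- symmetric finite sums over Z: k = -N .. N ---------- *)
Definition sumZ (N : nat) (f : Z -> R) : R :=
  fold_right Rplus 0 (map (fun i => f (Z.of_nat i - Z.of_nat N)%Z) (seq 0 (2 * N + 1))).
Definition sumZC (N : nat) (f : Z -> Cplx) : Cplx :=
  fold_right Cadd (0, 0) (map (fun i => f (Z.of_nat i - Z.of_nat N)%Z) (seq 0 (2 * N + 1))).

Definition Umat (g : Cplx) (theta : R) (k l : Z) : Cplx :=
  Cmul (Cexpi (IZR (k - l) * theta)) (RtoC (BesselJ (k - l) (2 * Cabs g))).

(* square partial sums of sum_{m,n} U_{l,m} rho_{m,n} conj(U_{l,n}) *)
Definition Tpartial (g : Cplx) (rho : Z -> Z -> Cplx) (l : Z) (theta : R) (N : nat) : Cplx :=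
  sumZC N (fun m => sumZC N (fun n =>
    Cmul (Cmul (Umat g theta l m) (rho m n)) (Cconj (Umat g theta l n)))).

Definition Tmap (g : Cplx) (rho : Z -> Z -> Cplx) (l : Z) (theta : R) : Cplx :=
  (Rlim (fun N => fst (Tpartial g rho l theta N)),
   Rlim (fun N => snd (Tpartial g rho l theta N))).

Definition hs_partial (rho : Z -> Z -> Cplx) (N : nat) : R :=
  sumZ N (fun m => sumZ N (fun n => Cnorm2 (rho m n))).

Definition is_l2ZZ (rho : Z -> Z -> Cplx) : Prop :=
  exists M, forall N, hs_partial rho N <= M.

Definition l2ZZ_norm (rho : Z -> Z -> Cplx) : R := sqrt (Rlim (hs_partial rho)).

Definition T_L2norm (g : Cplx) (rho : Z -> Z -> Cplx) : R :=
  sqrt (Rlim (fun L => sumZ L (fun l =>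
     Rint (fun theta => Cnorm2 (Tmap g rho l theta)) (- PI) PI))).

(* Main.v *)
Require Import Defs.
From Stdlib Require Import Reals Lra Lia Arith List ZArith FunctionalExtensionality ClassicalEpsilon.
Open Scope R_scope.

Lemma Rlim_const_eventually (u : nat -> R) (c : R) (N0 : nat) :
  (forall N, (N0 <= N)%nat -> u N = c) -> Rlim u = c.
Proof.
  intros H.
  assert (Hc : Un_cv u c).
  { intros eps He. exists N0. intros n Hn. rewrite H by lia.
    unfold R_dist. rewrite Rminus_diag, Rabs_R0. lra. }
  unfold Rlim. destruct excluded_middle_informative as [Hx|Hx].
  - destruct (constructive_indefinite_description _ Hx) as [l Hl]. simpl.
    exact (UL_sequence u l c Hl Hc).
  - exfalso. apply Hx. exists c. exact Hc.
Qed.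

Lemma Rlim_le (u : nat -> R) (M : R) :
  (forall n, u n <= M) -> 0 <= M -> Rlim u <= M.
Proof.
  intros H HM. unfold Rlim. destruct excluded_middle_informative as [Hx|Hx].
  - destruct (constructive_indefinite_description _ Hx) as [l Hl]. simpl.
    destruct (Rle_or_lt l M) as [|Hlt]; auto.
    destruct (Hl (l - M)) as [N HN]; [lra|].
    specialize (HN N (le_n N)). specialize (H N). unfold R_dist in HN.
    apply Rabs_def2 in HN. lra.
  - exact HM.
Qed.

Lemma Rlim_abs_le (u : nat -> R) (M : R) :
  (forall n, Rabs (u n) <= M) -> 0 <= M -> Rabs (Rlim u) <= M.
Proof.
  intros H HM. unfold Rlim. destruct excluded_middle_informative as [Hx|Hx].
  - destruct (constructive_indefinite_description _ Hx) as [l Hl]. simpl.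
    destruct (Rle_or_lt (Rabs l) M) as [|Hlt]; auto.
    destruct (Hl (Rabs l - M)) as [N HN]; [lra|].
    specialize (HN N (le_n N)). specialize (H N). unfold R_dist in HN.
    pose proof (Rabs_triang_inv l (u N)). rewrite Rabs_minus_sym in HN. lra.
  - rewrite Rabs_R0. exact HM.
Qed.

Lemma fold_map_le (A : Type) (F G : A -> R) (s : list A) :
  (forall a, F a <= G a) ->
  fold_right Rplus 0 (map F s) <= fold_right Rplus 0 (map G s).
Proof. intros H; induction s; simpl; [lra|]. specialize (H a). lra. Qed.

Lemma fold_plus_init (s : list R) (a : R) :
  fold_right Rplus a s = fold_right Rplus 0 s + a.
Proof. induction s; simpl; [lra|]. rewrite IHs. lra. Qed.

Lemma sumZ_le N f g : (forall l, f l <= g l) -> sumZ N f <= sumZ N g.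
Proof. intros H. unfold sumZ. apply fold_map_le. intros; apply H. Qed.

Lemma sumZ_0 f : sumZ 0 f = f 0%Z + 0.
Proof. reflexivity. Qed.

Lemma sumZ_S N f :
  sumZ (S N) f = f (- Z.of_nat (S N))%Z + sumZ N f + f (Z.of_nat (S N)).
Proof.
  unfold sumZ.
  replace (2 * S N + 1)%nat with (1 + ((2 * N + 1) + 1))%nat by lia. idtac.
  rewrite seq_app, seq_app.
  rewrite !map_app, !fold_right_app.
  cbn -[Z.of_nat Z.sub Nat.add Nat.mul].
  rewrite fold_plus_init.
  replace (0+1)%nat with 1%nat by reflexivity.
  rewrite <- seq_shift, map_map.
  rewrite (map_ext (fun x : nat => f (Z.of_nat (S x) - Z.of_nat (S N))%Z)
                   (fun i => f (Z.of_nat i - Z.of_nat N)%Z)).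
  - replace (Z.of_nat (0 + 1 + (2 * N + 1)) - Z.of_nat (S N))%Z with (Z.of_nat (S N)) by lia.
    replace (Z.of_nat 0 - Z.of_nat (S N))%Z with (- Z.of_nat (S N))%Z by lia.
    replace (Z.of_nat (1 + (2 * N + 1)) - Z.of_nat (S N))%Z with (Z.of_nat (S N)) by lia.
    lra.
  - intros a. f_equal. lia.
Qed.

Lemma sumZ_zero N h : (forall l, (- Z.of_nat N <= l <= Z.of_nat N)%Z -> h l = 0) -> sumZ N h = 0.
Proof.
  induction N; intros H.
  - rewrite sumZ_0, H by lia. lra.
  - rewrite sumZ_S, IHN. rewrite !H by lia. lra. intros; apply H; lia.
Qed.

Lemma sumZ_single N h z : (- Z.of_nat N <= z <= Z.of_nat N)%Z ->
  (forall l, l <> z -> h l = 0) -> sumZ N h = h z.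
Proof.
  induction N; intros Hz H.
  - assert (z = 0%Z) by lia. subst. rewrite sumZ_0. lra.
  - rewrite sumZ_S.
    destruct (Z.eq_dec z (- Z.of_nat (S N))) as [E|E].
    + subst. rewrite sumZ_zero. rewrite (H (Z.of_nat (S N))) by lia. lra.
      intros l Hl; apply H; lia.
    + destruct (Z.eq_dec z (Z.of_nat (S N))) as [E2|E2].
      * subst. rewrite sumZ_zero. rewrite (H (- Z.of_nat (S N))%Z) by lia. lra.
        intros l Hl; apply H; lia.
      * rewrite IHN. rewrite (H (Z.of_nat (S N))), (H (- Z.of_nat (S N))%Z) by lia. lra.
        lia. auto.
Qed.

Lemma sumZ_single_le N h z : (forall l, 0 <= h l) ->
  (forall l, l <> z -> h l = 0) -> sumZ N h <= h z.
Proof.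
  intros Hp H.
  destruct (Z_le_dec (- Z.of_nat N) z); destruct (Z_le_dec z (Z.of_nat N)).
  - rewrite (sumZ_single N h z); auto. lra.
  - rewrite sumZ_zero. apply Hp. intros; apply H; lia.
  - rewrite sumZ_zero. apply Hp. intros; apply H; lia.
  - rewrite sumZ_zero. apply Hp. intros; apply H; lia.
Qed.

Lemma sumZ_geo N : sumZ N (fun l => (1/2) ^ (Z.abs_nat l)) = 3 - 2 * (1/2) ^ N.
Proof.
  induction N.
  - rewrite sumZ_0. simpl. lra.
  - rewrite sumZ_S, IHN.
    replace (Z.abs_nat (- Z.of_nat (S N))) with (S N) by lia.
    replace (Z.abs_nat (Z.of_nat (S N))) with (S N) by lia.
    simpl. lra.
Qed.

Lemma fold_Cadd_fst (A : Type) (F : A -> Cplx) s :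
  fst (fold_right Cadd (0,0) (map F s)) = fold_right Rplus 0 (map (fun a => fst (F a)) s).
Proof. induction s; simpl; auto. rewrite IHs. reflexivity. Qed.
Lemma fold_Cadd_snd (A : Type) (F : A -> Cplx) s :
  snd (fold_right Cadd (0,0) (map F s)) = fold_right Rplus 0 (map (fun a => snd (F a)) s).
Proof. induction s; simpl; auto. rewrite IHs. reflexivity. Qed.

Lemma sumZC_fst N f : fst (sumZC N f) = sumZ N (fun l => fst (f l)).
Proof. unfold sumZC, sumZ. rewrite fold_Cadd_fst. reflexivity. Qed.
Lemma sumZC_snd N f : snd (sumZC N f) = sumZ N (fun l => snd (f l)).
Proof. unfold sumZC, sumZ. rewrite fold_Cadd_snd. reflexivity. Qed.

Lemma pow_half_mono (m n : nat) : (n <= m)%nat -> (1/2) ^ m <= (1/2) ^ n.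
Proof.
  intros H. replace m with (n + (m - n))%nat by lia. rewrite pow_add.
  assert (0 < (1/2)^n) by (apply pow_lt; lra).
  assert ((1/2)^(m-n) <= 1).
  { induction (m - n)%nat; simpl; [lra|]. assert (0 <= (1/2)^n0) by (apply pow_le; lra). nra. }
  nra.
Qed.

Lemma INR_fact_ge1 n : 1 <= INR (fact n).
Proof. pose proof (lt_O_fact n). apply (le_INR 1). lia. Qed.

Lemma fact_bound c : 0 <= c -> exists E, 0 <= E /\ forall n, c ^ n / INR (fact n) <= E.
Proof.
  intros Hc. destruct (INR_unbounded c) as [n0 Hn0].
  exists ((1 + c) ^ n0). split. { apply pow_le. lra. }
  induction n.
  - simpl. unfold Rdiv. rewrite Rinv_1, Rmult_1_l.
    replace 1 with (1 ^ n0) at 1 by apply pow1. apply pow_incr. lra.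
  - destruct (le_lt_dec (S n) n0) as [Hle|Hlt].
    + pose proof (INR_fact_ge1 (S n)).
      assert (0 <= c ^ S n) by (apply pow_le; lra).
      apply Rle_trans with (c ^ S n).
      { unfold Rdiv. rewrite <- (Rmult_1_r (c ^ S n)) at 2. apply Rmult_le_compat_l; auto.
        rewrite <- Rinv_1. apply Rinv_le_contravar; lra. }
      apply Rle_trans with ((1 + c) ^ S n). apply pow_incr; lra.
      apply Rle_pow; auto. lra.
    + change (fact (S n)) with (S n * fact n)%nat. rewrite mult_INR.
      assert (INR n0 <= INR n) by (apply le_INR; lia).
      rewrite S_INR in *. pose proof (INR_fact_lt_0 n). pose proof (pos_INR n).
      simpl pow.
      replace (c * c ^ n / ((INR n + 1) * INR (fact n))) with
        ((c ^ n / INR (fact n)) * (c / (INR n + 1))) by (field; lra).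
      assert (0 <= c ^ n / INR (fact n)).
      { apply Rmult_le_pos. apply pow_le; lra. left; apply Rinv_0_lt_compat; lra. }
      assert (c / (INR n + 1) <= 1).
      { apply Rmult_le_reg_r with (INR n + 1). lra. unfold Rdiv. rewrite Rmult_assoc, Rinv_l; lra. }
      assert (0 <= c / (INR n + 1)) by (apply Rmult_le_pos; [lra| left; apply Rinv_0_lt_compat; lra]).
      nra.
Qed.

Lemma fact_geo b : 0 <= b -> exists E, 0 <= E /\ forall n, b ^ n / INR (fact n) <= E * (1/2) ^ n.
Proof.
  intros Hb. destruct (fact_bound (2 * b)) as [E [HE H]]; [lra|].
  exists E. split; auto. intros n.
  replace (b ^ n) with ((2 * b) ^ n * (1/2) ^ n).
  2:{ rewrite <- Rpow_mult_distr. f_equal. lra. }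
  specialize (H n). pose proof (INR_fact_lt_0 n).
  assert (0 < (1/2)^n) by (apply pow_lt; lra).
  unfold Rdiv in *. rewrite (Rmult_comm ((2*b)^n)), Rmult_assoc.
  rewrite (Rmult_comm E). apply Rmult_le_compat_l; lra.
Qed.

Lemma BesselJ_nat_bound x : exists C, 0 <= C /\ forall n, Rabs (BesselJ_nat n x) <= C * (1/2) ^ n.
Proof.
  set (b := Rabs (x / 2)).
  assert (Hb : 0 <= b) by apply Rabs_pos.
  destruct (fact_geo (b * b)) as [E1 [HE1 H1]]; [nra|].
  destruct (fact_geo b) as [E2 [HE2 H2]]; [lra|].
  exists (2 * E1 * E2). split; [apply Rmult_le_pos; [lra|auto]|]. intros n.
  unfold BesselJ_nat, series.
  assert (0 <= (1/2)^n) by (apply pow_le; lra).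
  assert (0 <= E1 * E2) by (apply Rmult_le_pos; auto).
  apply Rlim_abs_le; [|apply Rmult_le_pos; [apply Rmult_le_pos; lra|auto]]. intros N.
  eapply Rle_trans; [apply sum_f_R0_triangle|].
  apply Rle_trans with (sum_f_R0 (fun k => (E1 * E2 * (1/2)^n) * (1/2)^k) N).
  - apply sum_Rle. intros k _.
    pose proof (INR_fact_lt_0 k). pose proof (INR_fact_lt_0 (k + n)). pose proof (INR_fact_lt_0 n).
    assert (INR (fact n) <= INR (fact (k + n))) by (apply le_INR, fact_le; lia).
    rewrite Rabs_mult. unfold Rdiv. rewrite Rabs_mult, Rabs_Rinv by (apply Rgt_not_eq, Rmult_lt_0_compat; lra).
    rewrite pow_1_abs, Rabs_mult, !Rabs_pos_eq by lra. rewrite <- RPow_abs.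
    fold b. rewrite pow_add. rewrite pow_mult.
    specialize (H1 k). specialize (H2 n).
    assert (Hbk : 0 <= (b^2)^k) by (apply pow_le; nra).
    assert (Hbn : 0 <= b^n) by (apply pow_le; nra).
    replace (b^2) with (b*b) in * by ring.
    assert (0 < (1/2)^k) by (apply pow_lt; lra).
    apply Rle_trans with (((b*b)^k / INR (fact k)) * (b ^ n / INR (fact n))).
    + unfold Rdiv. rewrite Rinv_mult. change (Rabs (x * / 2)) with b. replace (b^2) with (b*b) by ring.
      replace (1 * (/ INR (fact k) * / INR (fact (k + n))) * ((b * b) ^ k * b ^ n)) with
        (((b*b)^k * / INR (fact k)) * (b ^ n * / INR (fact (k + n)))) by ring.
      apply Rmult_le_compat_l. apply Rmult_le_pos; auto. left; apply Rinv_0_lt_compat; lra.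
      apply Rmult_le_compat_l; auto. apply Rinv_le_contravar; lra.
    + assert (0 <= (b*b)^k / INR (fact k)) by (apply Rmult_le_pos; auto; left; apply Rinv_0_lt_compat; lra).
      assert (0 <= b^n / INR (fact n)) by (apply Rmult_le_pos; auto; left; apply Rinv_0_lt_compat; lra).
      apply Rle_trans with ((E1 * (1/2)^k) * (E2 * (1/2)^n)); [apply Rmult_le_compat; auto | unfold Rdiv; right; ring].
  - assert (Hs: sum_f_R0 (fun k => E1 * E2 * (1/2)^n * (1/2)^k) N = (E1 * E2 * (1/2)^n) * sum_f_R0 (fun k => (1/2)^k) N) by (rewrite scal_sum; apply sum_eq; intros; ring).
    rewrite Hs, tech3 by lra.
    assert (0 <= (1/2)^(S N)) by (apply pow_le; lra).
    assert (0 <= E1 * E2 * (1/2)^n) by (apply Rmult_le_pos; nra).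
    replace ((1 - (1/2)^(S N)) / (1 - 1/2)) with (2 - 2 * (1/2)^(S N)) by field.
    nra.
Qed.

Lemma BesselJ_bound x : exists C, 0 <= C /\ forall n : Z, Rabs (BesselJ n x) <= C * (1/2) ^ (Z.abs_nat n).
Proof.
  destruct (BesselJ_nat_bound x) as [C [HC H]]. exists C. split; auto. intros n.
  unfold BesselJ. destruct (Z.leb 0 n) eqn:E.
  - apply Z.leb_le in E. replace (Z.abs_nat n) with (Z.to_nat n) by lia. apply H.
  - apply Z.leb_gt in E. rewrite Rabs_mult, pow_1_abs, Rmult_1_l.
    replace (Z.abs_nat n) with (Z.to_nat (- n)) by lia. apply H.
Qed.

Lemma sumZ_scal N c f : sumZ N (fun l => c * f l) = c * sumZ N f.
Proof.
  unfold sumZ. induction (seq 0 (2 * N + 1)); simpl; [ring|]. rewrite IHl. ring.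
Qed.

Lemma sumZ_ext N f g : (forall l, f l = g l) -> sumZ N f = sumZ N g.
Proof. intros H. f_equal. apply functional_extensionality. auto. Qed.

Lemma Rint_const c a b : a <= b -> Rint (fun _ => c) a b = c * (b - a).
Proof.
  intros _. unfold Rint. destruct excluded_middle_informative as [Hi|Hi].
  - apply (RiemannInt_P15 (c:=c)).
  - exfalso. apply Hi. constructor. exact (RiemannInt_P14 a b c).
Qed.

Lemma Cnorm2_mul a b : Cnorm2 (Cmul a b) = Cnorm2 a * Cnorm2 b.
Proof. destruct a, b; unfold Cnorm2, Cmul; simpl; ring. Qed.
Lemma Cnorm2_conj a : Cnorm2 (Cconj a) = Cnorm2 a.
Proof. destruct a; unfold Cnorm2, Cconj; simpl; ring. Qed.
Lemma Cnorm2_Umat g th k l : Cnorm2 (Umat g th k l) = BesselJ (k - l) (2 * Cabs g) ^ 2.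
Proof.
  unfold Umat. rewrite Cnorm2_mul. unfold Cnorm2, Cexpi, RtoC; simpl.
  pose proof (sin2_cos2 (IZR (k - l) * th)). unfold Rsqr in H. nra.
Qed.

Lemma term_zero (u v : Cplx) : fst (Cmul (Cmul u (0,0)) v) = 0 /\ snd (Cmul (Cmul u (0,0)) v) = 0.
Proof. destruct u, v; unfold Cmul; simpl; split; ring. Qed.

Definition rhoK (K : nat) (m n : Z) : Cplx :=
  if Z.eq_dec m 0 then if Z.eq_dec n (Z.of_nat K) then (1,0) else (0,0) else (0,0).

Lemma Cnorm2_zero : Cnorm2 (0,0) = 0.
Proof. unfold Cnorm2; simpl; ring. Qed.

Lemma sumZ_nonneg N f : (forall l, 0 <= f l) -> 0 <= sumZ N f.
Proof.
  intros H. rewrite <- (sumZ_zero N (fun _ => 0)) by auto. apply sumZ_le. auto.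
Qed.

Lemma hs_rhoK_le K N : hs_partial (rhoK K) N <= 1.
Proof.
  unfold hs_partial.
  eapply Rle_trans. apply (sumZ_single_le N _ 0%Z).
  - intros l. apply sumZ_nonneg. intros; unfold Cnorm2; nra.
  - intros l Hl. apply sumZ_zero. intros n _. unfold rhoK.
    destruct (Z.eq_dec l 0); [lia|]. apply Cnorm2_zero.
  - eapply Rle_trans. apply (sumZ_single_le N _ (Z.of_nat K)).
    + intros; unfold Cnorm2; nra.
    + intros n Hn. unfold rhoK. destruct (Z.eq_dec 0 0); [|lia].
      destruct (Z.eq_dec n (Z.of_nat K)); [lia|]. apply Cnorm2_zero.
    + unfold rhoK. destruct (Z.eq_dec 0 0); [|lia].
      destruct (Z.eq_dec (Z.of_nat K) (Z.of_nat K)); [|lia]. unfold Cnorm2; simpl; lra.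
Qed.

Lemma hs_rhoK_eq K N : (K <= N)%nat -> hs_partial (rhoK K) N = 1.
Proof.
  intros HK. unfold hs_partial.
  rewrite (sumZ_single N _ 0%Z); [| lia |].
  - rewrite (sumZ_single N _ (Z.of_nat K)); [| lia |].
    + unfold rhoK. destruct (Z.eq_dec 0 0); [|lia].
      destruct (Z.eq_dec (Z.of_nat K) (Z.of_nat K)); [|lia]. unfold Cnorm2; simpl; lra.
    + intros n Hn. unfold rhoK. destruct (Z.eq_dec 0 0); [|lia].
      destruct (Z.eq_dec n (Z.of_nat K)); [lia|]. apply Cnorm2_zero.
  - intros l Hl. apply sumZ_zero. intros n _. unfold rhoK.
    destruct (Z.eq_dec l 0); [lia|]. apply Cnorm2_zero.
Qed.

Lemma norm_rhoK K : l2ZZ_norm (rhoK K) = 1.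
Proof.
  unfold l2ZZ_norm. rewrite (Rlim_const_eventually _ 1 K). apply sqrt_1.
  intros; apply hs_rhoK_eq; auto.
Qed.

Lemma l2_rhoK K : is_l2ZZ (rhoK K).
Proof. exists 1. apply hs_rhoK_le. Qed.

Definition tK g th l K : Cplx :=
  Cmul (Cmul (Umat g th l 0) (1,0)) (Cconj (Umat g th l (Z.of_nat K))).

Lemma Tpartial_rhoK g l th K N : (K <= N)%nat ->
  fst (Tpartial g (rhoK K) l th N) = fst (tK g th l K) /\
  snd (Tpartial g (rhoK K) l th N) = snd (tK g th l K).
Proof.
  intros HK. unfold Tpartial. rewrite sumZC_fst, sumZC_snd. split.
  - rewrite (sumZ_single N _ 0%Z); [| lia |].
    + rewrite sumZC_fst. rewrite (sumZ_single N _ (Z.of_nat K)); [| lia |].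
      * unfold rhoK, tK. destruct (Z.eq_dec 0 0); [|lia].
        destruct (Z.eq_dec (Z.of_nat K) (Z.of_nat K)); [|lia]. reflexivity.
      * intros n Hn. unfold rhoK. destruct (Z.eq_dec 0 0); [|lia].
        destruct (Z.eq_dec n (Z.of_nat K)); [lia|]. apply term_zero.
    + intros m Hm. rewrite sumZC_fst. apply sumZ_zero. intros n _. unfold rhoK.
      destruct (Z.eq_dec m 0); [lia|]. apply term_zero.
  - rewrite (sumZ_single N _ 0%Z); [| lia |].
    + rewrite sumZC_snd. rewrite (sumZ_single N _ (Z.of_nat K)); [| lia |].
      * unfold rhoK, tK. destruct (Z.eq_dec 0 0); [|lia].
        destruct (Z.eq_dec (Z.of_nat K) (Z.of_nat K)); [|lia]. reflexivity.
      * intros n Hn. unfold rhoK. destruct (Z.eq_dec 0 0); [|lia].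
        destruct (Z.eq_dec n (Z.of_nat K)); [lia|]. apply term_zero.
    + intros m Hm. rewrite sumZC_snd. apply sumZ_zero. intros n _. unfold rhoK.
      destruct (Z.eq_dec m 0); [lia|]. apply term_zero.
Qed.

Lemma Tmap_rhoK g l th K :
  Cnorm2 (Tmap g (rhoK K) l th) =
  BesselJ (l - 0) (2 * Cabs g) ^ 2 * BesselJ (l - Z.of_nat K) (2 * Cabs g) ^ 2.
Proof.
  unfold Tmap.
  rewrite (Rlim_const_eventually _ (fst (tK g th l K)) K)
    by (intros; apply Tpartial_rhoK; auto).
  rewrite (Rlim_const_eventually _ (snd (tK g th l K)) K)
    by (intros; apply Tpartial_rhoK; auto).
  rewrite <- surjective_pairing. unfold tK.
  rewrite !Cnorm2_mul, Cnorm2_conj, !Cnorm2_Umat. unfold Cnorm2; simpl. ring.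
Qed.

Lemma T_rhoK_bound g Cb K : 0 <= Cb ->
  (forall n : Z, Rabs (BesselJ n (2 * Cabs g)) <= Cb * (1/2) ^ (Z.abs_nat n)) ->
  T_L2norm g (rhoK K) <= sqrt (3 * (2 * PI * Cb ^ 4 * (1/2) ^ K)).
Proof.
  intros HCb HB. unfold T_L2norm. apply sqrt_le_1_alt.
  set (D := 2 * PI * Cb ^ 4 * (1/2) ^ K).
  assert (HD : 0 <= D).
  { unfold D. pose proof PI_RGT_0. assert (0 <= Cb^4) by (apply pow_le; lra).
    assert (0 <= (1/2)^K) by (apply pow_le; lra).
    apply Rmult_le_pos; [|auto]. apply Rmult_le_pos; [lra|auto]. }
  apply Rlim_le; [|lra]. intros L.
  apply Rle_trans with (sumZ L (fun l => D * (1/2) ^ (Z.abs_nat l))).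
  - apply sumZ_le. intros l.
    assert (Hf : (fun theta => Cnorm2 (Tmap g (rhoK K) l theta)) = (fun _ => BesselJ (l - 0) (2 * Cabs g) ^ 2 *
       BesselJ (l - Z.of_nat K) (2 * Cabs g) ^ 2)) by (apply functional_extensionality; intros; apply Tmap_rhoK).
    rewrite Hf.
    rewrite Rint_const by (pose proof PI_RGT_0; lra).
    set (a := Z.abs_nat l). set (b := Z.abs_nat (l - Z.of_nat K)).
    assert (Hab : (a + a + b + b >= K + a)%nat) by (unfold a, b; lia).
    pose proof (HB (l - 0)%Z) as H1. rewrite Z.sub_0_r in H1 |- *. fold a in H1.
    pose proof (HB (l - Z.of_nat K)%Z) as H2. fold b in H2.
    apply pow_maj_Rabs with (n := 2%nat) in H1. apply pow_maj_Rabs with (n := 2%nat) in H2.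
    pose proof (pow_half_mono _ _ Hab) as Hm. rewrite !pow_add in Hm.
    pose proof PI_RGT_0.
    assert (0 <= BesselJ l (2 * Cabs g) ^ 2) by (apply pow2_ge_0).
    assert (0 <= BesselJ (l - Z.of_nat K) (2 * Cabs g) ^ 2) by (apply pow2_ge_0).
    assert (0 <= (1/2)^a) by (apply pow_le; lra).
    assert (0 <= (1/2)^b) by (apply pow_le; lra).
    assert (0 <= Cb^4) by (apply pow_le; lra).
    apply Rle_trans with ((Cb * (1/2)^a) ^ 2 * (Cb * (1/2)^b) ^ 2 * (PI - - PI)).
    + apply Rmult_le_compat_r; [lra|]. apply Rmult_le_compat; auto.
    + unfold D. 
      replace ((Cb * (1/2)^a) ^ 2 * (Cb * (1/2)^b) ^ 2 * (PI - - PI)) with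
        (2 * PI * Cb ^ 4 * ((1/2)^a * (1/2)^a * (1/2)^b * (1/2)^b)) by ring.
      replace (2 * PI * Cb ^ 4 * (1/2) ^ K * (1/2) ^ a) with
        (2 * PI * Cb ^ 4 * ((1/2) ^ K * (1/2) ^ a)) by ring.
      apply Rmult_le_compat_l; [|exact Hm].
      apply Rmult_le_pos; [lra|auto].
  - rewrite sumZ_scal, sumZ_geo.
    assert (0 <= (1/2)^L) by (apply pow_le; lra). nra.
Qed.

Theorem mainTheorem5 (g : Cplx) (hg : g <> (0, 0)) :
  ~ (exists Cst : R, forall rho : Z -> Z -> Cplx,
        is_l2ZZ rho -> l2ZZ_norm rho <= Cst * T_L2norm g rho).
Proof.
  intros [Cst HC].
  destruct (BesselJ_bound (2 * Cabs g)) as [Cb [HCb HB]].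
  set (D := Cst ^ 2 * (3 * (2 * PI * Cb ^ 4))).
  assert (HD : 0 <= D).
  { unfold D. pose proof PI_RGT_0. assert (0 <= Cb^4) by (apply pow_le; lra).
    apply Rmult_le_pos. apply pow2_ge_0. nra. }
  destruct (pow_lt_1_zero (1/2)) with (y := 1 / (D + 1)) as [K HK].
  { rewrite Rabs_pos_eq; lra. }
  { apply Rdiv_lt_0_compat; lra. }
  specialize (HK K (le_n K)). rewrite Rabs_pos_eq in HK by (apply pow_le; lra).
  specialize (HC (rhoK K) (l2_rhoK K)). rewrite norm_rhoK in HC.
  pose proof (T_rhoK_bound g Cb K HCb HB) as HT.
  assert (HT0 : 0 <= T_L2norm g (rhoK K)) by (unfold T_L2norm; apply sqrt_pos).
  set (B := 3 * (2 * PI * Cb ^ 4 * (1/2) ^ K)) in HT.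
  assert (HB0 : 0 <= B).
  { unfold B. pose proof PI_RGT_0. assert (0 <= Cb^4) by (apply pow_le; lra).
    assert (0 <= (1/2)^K) by (apply pow_le; lra).
    apply Rmult_le_pos; [lra|]. apply Rmult_le_pos; [|auto]. apply Rmult_le_pos; [lra|auto]. }
  pose proof (sqrt_sqrt B HB0) as Hs. pose proof (sqrt_pos B) as Hs0.
  set (s := sqrt B) in *.
  assert (HDB : Cst ^ 2 * B < 1).
  { replace (Cst ^ 2 * B) with (D * (1/2)^K) by (unfold D, B; ring).
    assert (0 <= (1/2)^K) by (apply pow_le; lra).
    assert (D * (1/2)^K <= D * (1 / (D + 1))) by (apply Rmult_le_compat_l; lra).
    assert (D * (1 / (D+1)) < 1).
    { unfold Rdiv. rewrite Rmult_1_l. apply Rmult_lt_reg_r with (D+1); [lra|].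
      rewrite Rmult_assoc, Rinv_l; lra. }
    lra. }
  destruct (Rle_or_lt Cst 0) as [Hneg|Hpos].
  - nra.
  - assert (Cst * T_L2norm g (rhoK K) <= Cst * s) by (apply Rmult_le_compat_l; lra).
    assert (Cst * s < 1) by nra.
    lra.
Qed.
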